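(* Let $\varphi(x)$ be a formula of the correspondence language with only $x$ free, let $k=r(\varphi)$, and suppose $\varphi(x)$ is invariant with respect to $(2,2)$-modal $k$-asimulations. Then $\varphi(x)$ is logically equivalent to $ST_{22}(I,x)$ for some modal intuitionistic formula $I$.
   Context: Correspondence language: classical first-order logic without identity over $\Sigma=\{R,R_\Box,R_\Diamond,P_1,P_2,\dots\}$ ($R,R_\Box,R_\Diamond$ binary, $P_n$ unary). $\Theta$ is a subset of $\Sigma$ containing $R,R_\Box,R_\Diamond$; $\Theta$-models $M_k=\langle U_k,\iota_k\rangle$, with $R_k=\iota_k(R)$, $R_{\Box k}=\iota_k(R_\Box)$, $R_{\Diamond k}=\iota_k(R_\Diamond)$. $\Sigma_\varphi=\{R,R_\Box,R_\Diamond\}\cup\{P_n:P_n\text{ occurs in }\varphi\}$. $a\models_k\varphi(x)$ means $\varphi$ holds in $M_k$ under assignments sending $x$ to $a$. $r(\varphi)$ is quantifier depth ($0$ for atoms and $\bot$, max over binary connectives, $+1$ per quantifier). $s\overset{\leftrightarrow}{A}t$ means $sAt$ and $tAs$. Modal intuitionistic formulas: built from $p_n,\bot$ with $\wedge,\vee,\to,\Box,\Diamond$. $ST_{22}(p_n,x)=P_n(x)$, $ST_{22}(\bot,x)=\bot$, commutes with $\wedge,\vee$; $ST_{22}(I\to J,x)=\forall y(R(x,y)\to(ST_{22}(I,y)\to ST_{22}(J,y)))$; $ST_{22}(\Box I,x)=\forall y(R(x,y)\to\forall z(R_\Box(y,z)\to ST_{22}(I,z)))$; $ST_{22}(\Diamond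 I,x)=\forall y(R(x,y)\to\exists z(R_\Diamond(y,z)\wedge ST_{22}(I,z)))$. A $(2,2)$-modal $\langle(M_1,t),(M_2,u)\rangle_k$-asimulation, for pointed $\Theta$-models, is a pair $(A,B)$ of relations on finite nonempty tuples such that, for all $i,j\in\{1,2\}$, $m$, $\bar a_m,a,c,e\in U_i$, $\bar b_m,b,d,f\in U_j$, unary $P\in\Theta$: $A,B\subseteq\bigcup_{n>0}((U_1^n\times U_2^n)\cup(U_2^n\times U_1^n))$; $tAu$; if $(\bar a_m,a)A(\bar b_m,b)$ and $a\models_iP(x)$ then $b\models_jP(x)$; if $(\bar a_m,a)A(\bar b_m,b)$, $bR_jd$, $m<k$ then some $c\in U_i$ has $aR_ic$ and $(\bar a_m,a,c)\overset{\leftrightarrow}{A}(\bar b_m,b,d)$; if $(\bar a_m,a)A(\bar b_m,b)$, $bR_jd$, $dR_{\Box j}f$, $m+1<k$ then some $c,e\in U_i$ have $aR_ic$, $cR_{\Box i}e$, $(\bar a_m,a,c,e)A(\bar b_m,b,d,f)$; if $(\bar a_m,a)A(\bar b_m,b)$, $bR_jd$, $m+1<k$ then some $c\in U_i$ has $aR_ic$ and $(\bar a_m,a,c)B(\bar b_m,b,d)$; if $(\bar a_m,a)B(\bar b_m,b)$, $aR_{\Diamond i}c$, $m<k$ then some $d\in U_j$ has $bR_{\Diamond j}d$ and $(\bar a_m,a,c)A(\bar b_m,b,d)$. $\varphi(x)$ is invariant with respect to $(2,2)$-modal $k$-asimulations iff for every $\Theta\supseteq\Sigma_\varphi$, all pointed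 $\Theta$-models $(M_1,t),(M_2,u)$, every such $(A,B)$, and all $a\in U_1,b\in U_2$ with $aAb$ (one-element tuples): $a\models_1\varphi(x)$ implies $b\models_2\varphi(x)$. *)

(* Defs.v *)
From Stdlib Require Import List Arith.
Import ListNotations.

Inductive form : Type :=
| FR    : nat -> nat -> form
| FRbox : nat -> nat -> form
| FRdia : nat -> nat -> form
| FP    : nat -> nat -> form          (* FP n x  =  P_n(x) *)
| FBot  : form
| FAnd  : form -> form -> form
| FOr   : form -> form -> form
| FImp  : form -> form -> form
| FAll  : nat -> form -> form
| FEx   : nat -> form -> form.

Fixpoint depth (f : form) : nat :=
  match f with
  | FR _ _ | FRbox _ _ | FRdia _ _ | FP _ _ | FBot => 0
  | FAnd a b | FOr a b | FImp a b => Nat.max (depth a) (depth b)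
  | FAll _ a | FEx _ a => S (depth a)
  end.

Fixpoint free_in (y : nat) (f : form) : Prop :=
  match f with
  | FR a b | FRbox a b | FRdia a b => y = a \/ y = b
  | FP _ a => y = a
  | FBot => False
  | FAnd a b | FOr a b | FImp a b => free_in y a \/ free_in y b
  | FAll z a | FEx z a => y <> z /\ free_in y a
  end.

Fixpoint occurs_P (n : nat) (f : form) : Prop :=
  match f with
  | FP m _ => n = m
  | FR _ _ | FRbox _ _ | FRdia _ _ | FBot => False
  | FAnd a b | FOr a b | FImp a b => occurs_P n a \/ occurs_P n b
  | FAll _ a | FEx _ a => occurs_P n a
  end.

(* A model interprets R, R_Box, R_Dia and every P_n (a Theta-model is modelled as a
   model together with the set Theta of unary indices that count, see asim22). *)
Record model : Type := Model {
  dom : Type;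
  relR : dom -> dom -> Prop;
  relB : dom -> dom -> Prop;
  relD : dom -> dom -> Prop;
  predP : nat -> dom -> Prop
}.

Definition upd {U : Type} (g : nat -> U) (y : nat) (a : U) : nat -> U :=
  fun z => if Nat.eqb z y then a else g z.

Fixpoint sat (M : model) (g : nat -> dom M) (f : form) : Prop :=
  match f with
  | FR a b => relR M (g a) (g b)
  | FRbox a b => relB M (g a) (g b)
  | FRdia a b => relD M (g a) (g b)
  | FP n a => predP M n (g a)
  | FBot => False
  | FAnd a b => sat M g a /\ sat M g b
  | FOr a b => sat M g a \/ sat M g b
  | FImp a b => sat M g a -> sat M g b
  | FAll y a => forall d : dom M, sat M (upd g y d) a
  | FEx y a => exists d : dom M, sat M (upd g y d) a
  end.

Definition sat_at (M : model) (a : dom M) (x : nat) (f : form) : Prop :=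
  forall g : nat -> dom M, g x = a -> sat M g f.

Definition log_equiv (f1 f2 : form) : Prop :=
  forall (M : model) (g : nat -> dom M), sat M g f1 <-> sat M g f2.

Inductive iform : Type :=
| IVar : nat -> iform
| IBot : iform
| IAnd : iform -> iform -> iform
| IOr  : iform -> iform -> iform
| IImp : iform -> iform -> iform
| IBox : iform -> iform
| IDia : iform -> iform.

(* ST_22(I, x); bound variables y := x+1, z := x+2 are distinct from x
   (ST_22(I,x) has only x free, so no capture occurs). *)
Fixpoint ST22 (I : iform) (x : nat) : form :=
  match I with
  | IVar n => FP n x
  | IBot => FBot
  | IAnd a b => FAnd (ST22 a x) (ST22 b x)
  | IOr a b => FOr (ST22 a x) (ST22 b x)
  | IImp a b =>
      FAll (S x) (FImp (FR x (S x)) (FImp (ST22 a (S x)) (ST22 b (S x))))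
  | IBox a =>
      FAll (S x) (FImp (FR x (S x))
        (FAll (S (S x)) (FImp (FRbox (S x) (S (S x))) (ST22 a (S (S x))))))
  | IDia a =>
      FAll (S x) (FImp (FR x (S x))
        (FEx (S (S x)) (FAnd (FRdia (S x) (S (S x))) (ST22 a (S (S x))))))
  end.

(* Tuples are lists; (abar_m, a) is  abar ++ [a]  with m = length abar.
   A relation from U_i-tuples to U_j-tuples (i <> j) is split into its two
   directions A12 / A21 (resp. B12 / B21). *)
Definition asim_dir (Th : nat -> Prop) (k : nat) (Mi Mj : model)
  (Aij : list (dom Mi) -> list (dom Mj) -> Prop)
  (Aji : list (dom Mj) -> list (dom Mi) -> Prop)
  (Bij : list (dom Mi) -> list (dom Mj) -> Prop) : Prop :=
  (forall (as_ : list (dom Mi)) (a : dom Mi) (bs : list (dom Mj)) (b : dom Mj) (n : nat),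
      Aij (as_ ++ [a]) (bs ++ [b]) -> Th n -> predP Mi n a -> predP Mj n b)
  /\
  (forall as_ a bs b (d : dom Mj),
      Aij (as_ ++ [a]) (bs ++ [b]) -> relR Mj b d -> length as_ < k ->
      exists c : dom Mi, relR Mi a c /\
        Aij (as_ ++ [a; c]) (bs ++ [b; d]) /\ Aji (bs ++ [b; d]) (as_ ++ [a; c]))
  /\
  (forall as_ a bs b (d f : dom Mj),
      Aij (as_ ++ [a]) (bs ++ [b]) -> relR Mj b d -> relB Mj d f -> S (length as_) < k ->
      exists c e : dom Mi, relR Mi a c /\ relB Mi c e /\
        Aij (as_ ++ [a; c; e]) (bs ++ [b; d; f]))
  /\
  (forall as_ a bs b (d : dom Mj),
      Aij (as_ ++ [a]) (bs ++ [b]) -> relR Mj b d -> S (length as_) < k ->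
      exists c : dom Mi, relR Mi a c /\ Bij (as_ ++ [a; c]) (bs ++ [b; d]))
  /\
  (forall as_ a bs b (c : dom Mi),
      Bij (as_ ++ [a]) (bs ++ [b]) -> relD Mi a c -> length as_ < k ->
      exists d : dom Mj, relD Mj b d /\ Aij (as_ ++ [a; c]) (bs ++ [b; d])).

Definition tuple_rel {U V : Type} (X : list U -> list V -> Prop) : Prop :=
  forall s t, X s t -> length s = length t /\ s <> [].

(* (A,B) is a (2,2)-modal <(M1,t),(M2,u)>_k-asimulation for Theta-models, where
   Th is the set of indices n with P_n in Theta (R, R_Box, R_Dia always in Theta). *)
Definition asim22 (Th : nat -> Prop) (k : nat) (M1 M2 : model) (t : dom M1) (u : dom M2)
  (A12 : list (dom M1) -> list (dom M2) -> Prop)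
  (A21 : list (dom M2) -> list (dom M1) -> Prop)
  (B12 : list (dom M1) -> list (dom M2) -> Prop)
  (B21 : list (dom M2) -> list (dom M1) -> Prop) : Prop :=
  tuple_rel A12 /\ tuple_rel A21 /\ tuple_rel B12 /\ tuple_rel B21 /\
  A12 [t] [u] /\
  asim_dir Th k M1 M2 A12 A21 B12 /\
  asim_dir Th k M2 M1 A21 A12 B21.

Definition invariant22 (f : form) (x : nat) (k : nat) : Prop :=
  forall (Th : nat -> Prop), (forall n, occurs_P n f -> Th n) ->
  forall (M1 M2 : model) (t : dom M1) (u : dom M2) A12 A21 B12 B21,
    asim22 Th k M1 M2 t u A12 A21 B12 B21 ->
    forall (a : dom M1) (b : dom M2), A12 [a] [b] ->
      sat_at M1 a x f -> sat_at M2 b x f.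

(* Main.v *)
Require Import Defs.
From Stdlib Require Import List Arith Lia Classical.
Import ListNotations.

Lemma upd_same {U} (g : nat -> U) y a : upd g y a y = a.
Proof. unfold upd; rewrite Nat.eqb_refl; reflexivity. Qed.
Lemma upd_other {U} (g : nat -> U) y a z : z <> y -> upd g y a z = g z.
Proof. intro H; unfold upd; destruct (Nat.eqb_spec z y); [contradiction|reflexivity]. Qed.

Fixpoint isat (M : model) (a : dom M) (I : iform) : Prop :=
  match I with
  | IVar n => predP M n a
  | IBot => False
  | IAnd p q => isat M a p /\ isat M a q
  | IOr p q => isat M a p \/ isat M a q
  | IImp p q => forall c, relR M a c -> isat M c p -> isat M c q
  | IBox p => forall c, relR M a c -> forall e, relB M c e -> isat M e p
  | IDia p => forall c, relR M a c -> exists e, relD M c e /\ isat M e p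
  end.

Ltac us := repeat (rewrite ?upd_same; rewrite ?upd_other by lia).
Ltac usH H := repeat (rewrite ?upd_same in H; rewrite ?upd_other in H by lia).

Lemma ST_isat : forall I x M g, sat M g (ST22 I x) <-> isat M (g x) I.
Proof.
  induction I; intros x M g; simpl.
  - reflexivity.
  - reflexivity.
  - rewrite IHI1, IHI2; reflexivity.
  - rewrite IHI1, IHI2; reflexivity.
  - split; intros H d; specialize (H d);
      rewrite ?IHI1, ?IHI2, ?upd_same, ?upd_other in * by lia; exact H.
  - split; intros H d; specialize (H d).
    + intros Hr e He.
      specialize (H ltac:(us; exact Hr) e
                   ltac:(us; exact He)).
      rewrite IHI, upd_same in H. exact H.
    + intros Hr e He; usH Hr; usH He.
      rewrite IHI, upd_same. apply (H Hr e He).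
  - split; intros H d; specialize (H d).
    + intros Hr; usH Hr; try usH H.
      destruct (H Hr) as [e [He1 He2]]. exists e.
      rewrite IHI in He2. usH He1; usH He2; auto.
    + intros Hr; usH Hr; try usH H.
      destruct (H Hr) as [e [He1 He2]]. exists e.
      rewrite IHI. us; auto.
Qed.

Lemma sat_ext : forall f M g g', (forall y, free_in y f -> g y = g' y) ->
  (sat M g f <-> sat M g' f).
Proof.
  induction f; intros M g g' H; simpl in *;
    try (rewrite (H n), (H n0) by auto; reflexivity).
  - rewrite (H n0) by auto; reflexivity.
  - reflexivity.
  - rewrite (IHf1 M g g'), (IHf2 M g g') by auto; reflexivity.
  - rewrite (IHf1 M g g'), (IHf2 M g g') by auto; reflexivity.
  - rewrite (IHf1 M g g'), (IHf2 M g g') by auto; reflexivity.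
  - split; intros H1 d; [rewrite <- (IHf M (upd g n d))|rewrite (IHf M (upd g n d) (upd g' n d))]; auto;
    intros y Hy; destruct (Nat.eq_dec y n); subst; rewrite ?upd_same, ?upd_other by auto; auto.
  - split; intros [d H1]; exists d; [rewrite <- (IHf M (upd g n d))|rewrite (IHf M (upd g n d) (upd g' n d))]; auto;
    intros y Hy; destruct (Nat.eq_dec y n); subst; rewrite ?upd_same, ?upd_other by auto; auto.
Qed.
Fixpoint pw {T : Type} (l : list T) : list (list T) :=
  match l with
  | [] => [[]]
  | x :: r => map (cons x) (pw r) ++ pw r
  end.

Lemma pw_sel {T : Type} (Q : T -> Prop) : forall l,
  exists S, In S (pw l) /\ (forall y, In y S <-> In y l /\ Q y).
Proof.
  induction l as [|x r IH].
  - exists []; simpl; split; [auto|]. intros y; tauto.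
  - destruct IH as [S [HS HS']]. destruct (classic (Q x)) as [Hq|Hq].
    + exists (x :: S); split.
      * simpl; apply in_or_app; left; apply in_map; auto.
      * intros y; simpl; rewrite HS'; split.
        -- intros [<-|[]]; auto.
        -- intros [[<-|Hy] Hq']; auto.
    + exists S; split.
      * simpl; apply in_or_app; right; auto.
      * intros y; simpl; rewrite HS'; split.
        -- intros []; auto.
        -- intros [[<-|Hy] Hq']; [contradiction|auto].
Qed.

Definition ITop := IImp IBot IBot.
Fixpoint Conj (l : list iform) : iform :=
  match l with [] => ITop | J :: r => IAnd J (Conj r) end.
Fixpoint Disj (l : list iform) : iform :=
  match l with [] => IBot | J :: r => IOr J (Disj r) end.

Lemma Conj_sat M a l : isat M a (Conj l) <-> forall I, In I l -> isat M a I.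
Proof.
  induction l; simpl.
  - split; [tauto|]. intros _ c _ H; exact H.
  - rewrite IHl. split; [intros [H1 H2] I [<-|HI]; auto|].
    intros H; split; auto.
Qed.

Lemma Disj_sat M a l : isat M a (Disj l) <-> exists I, In I l /\ isat M a I.
Proof.
  induction l; simpl.
  - split; [tauto|]. intros [I [[] _]].
  - rewrite IHl. split.
    + intros [H|[I [H1 H2]]]; eauto.
    + intros [I [[<-|H1] H2]]; eauto.
Qed.

Fixpoint LL (V : list nat) (l : nat) : list iform :=
  match l with
  | 0 => map IVar V
  | S l' => let P := LL V l' in
      P ++ map (fun p => IImp (Conj (fst p)) (Disj (snd p))) (list_prod (pw P) (pw P))
        ++ map (fun S => IBox (Disj S)) (pw P)
        ++ map (fun T => IDia (Disj (map Conj T))) (pw (pw P))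
  end.

Lemma LL_mono V l I : In I (LL V l) -> In I (LL V (S l)).
Proof. intro H; simpl; apply in_or_app; auto. Qed.

Lemma LL_base V n : In n V -> forall l, In (IVar n) (LL V l).
Proof. intros H l; induction l; [simpl; apply in_map; auto| apply LL_mono; auto]. Qed.

Lemma imp_in V l S1 S2 : In S1 (pw (LL V l)) -> In S2 (pw (LL V l)) ->
  In (IImp (Conj S1) (Disj S2)) (LL V (S l)).
Proof.
  intros H1 H2; simpl; apply in_or_app; right; apply in_or_app; left.
  apply (in_map (fun p => IImp (Conj (fst p)) (Disj (snd p))) _ (S1, S2)).
  apply in_prod; auto.
Qed.

Lemma box_in V l X : In X (pw (LL V l)) -> In (IBox (Disj X)) (LL V (S l)).
Proof.
  intros H; simpl; apply in_or_app; right; apply in_or_app; right; apply in_or_app; left.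
  apply (in_map (fun S => IBox (Disj S))); auto.
Qed.

Lemma dia_in V l T : In T (pw (pw (LL V l))) -> In (IDia (Disj (map Conj T))) (LL V (S l)).
Proof.
  intros H; simpl; apply in_or_app; right; apply in_or_app; right; apply in_or_app; right.
  apply (in_map (fun T => IDia (Disj (map Conj T)))); auto.
Qed.

Fixpoint Pvars (f : form) : list nat :=
  match f with
  | FP n _ => [n]
  | FAnd a b | FOr a b | FImp a b => Pvars a ++ Pvars b
  | FAll _ a | FEx _ a => Pvars a
  | _ => []
  end.

Lemma Pvars_ok n f : occurs_P n f -> In n (Pvars f).
Proof. induction f; simpl; intuition; apply in_or_app; auto. Qed.
Definition thy V n (Mi Mj : model) (a : dom Mi) (b : dom Mj) : Prop :=
  forall I, In I (LL V n) -> isat Mi a I -> isat Mj b I.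

Definition Arel V k (Mi Mj : model) (s : list (dom Mi)) (t : list (dom Mj)) : Prop :=
  exists s0 a t0 b n, s = s0 ++ [a] /\ t = t0 ++ [b] /\ length s0 = length t0 /\
    length s0 + n = k /\ thy V n Mi Mj a b.

Definition Brel V k (Mi Mj : model) (s : list (dom Mi)) (t : list (dom Mj)) : Prop :=
  exists s0 a t0 b, s = s0 ++ [a] /\ t = t0 ++ [b] /\ length s0 = length t0 /\
    forall c, relD Mi a c -> length s0 < k ->
      exists d, relD Mj b d /\ Arel V k Mi Mj (s0 ++ [a; c]) (t0 ++ [b; d]).

Lemma Arel_dec V k Mi Mj as_ a bs b : Arel V k Mi Mj (as_ ++ [a]) (bs ++ [b]) ->
  exists n, length as_ = length bs /\ length as_ + n = k /\ thy V n Mi Mj a b.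
Proof.
  intros [s0 [a0 [t0 [b0 [n [E1 [E2 [E3 [E4 E5]]]]]]]]].
  apply app_inj_tail in E1; apply app_inj_tail in E2.
  destruct E1, E2; subst; eauto.
Qed.

Lemma Arel_intro V k Mi Mj as_ a bs b n : length as_ = length bs -> length as_ + n = k ->
  thy V n Mi Mj a b -> Arel V k Mi Mj (as_ ++ [a]) (bs ++ [b]).
Proof. intros; exists as_, a, bs, b, n; auto. Qed.

Lemma snoc2 {T} (l : list T) a c : l ++ [a; c] = (l ++ [a]) ++ [c].
Proof. rewrite <- app_assoc; reflexivity. Qed.
Lemma snoc3 {T} (l : list T) a c e : l ++ [a; c; e] = (l ++ [a; c]) ++ [e].
Proof. rewrite <- app_assoc; reflexivity. Qed.

Lemma tuple_A V k Mi Mj : tuple_rel (Arel V k Mi Mj).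
Proof.
  intros s t [s0 [a0 [t0 [b0 [n [E1 [E2 [E3 _]]]]]]]]; subst.
  rewrite !length_app; split; [simpl; lia|]. destruct s0; discriminate.
Qed.
Lemma tuple_B V k Mi Mj : tuple_rel (Brel V k Mi Mj).
Proof.
  intros s t [s0 [a0 [t0 [b0 [E1 [E2 [E3 _]]]]]]]; subst.
  rewrite !length_app; split; [simpl; lia|]. destruct s0; discriminate.
Qed.

Lemma dir_ok V k (Th : nat -> Prop) Mi Mj : (forall n, Th n -> In n V) ->
  asim_dir Th k Mi Mj (Arel V k Mi Mj) (Arel V k Mj Mi) (Brel V k Mi Mj).
Proof.
  intros HV. split; [|split; [|split; [|split]]].
  -
    intros as_ a bs b n0 HA HT HP.
    destruct (Arel_dec _ _ _ _ _ _ _ _ HA) as [n [_ [_ Ht]]].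
    apply (Ht (IVar n0)); [apply LL_base; auto | exact HP].
  -
    intros as_ a bs b d HA Hbd Hlt.
    destruct (Arel_dec _ _ _ _ _ _ _ _ HA) as [n [Hl [Hk Ht]]].
    destruct n as [|n]; [lia|].
    destruct (classic (exists c, relR Mi a c /\ thy V n Mi Mj c d /\ thy V n Mj Mi d c))
      as [[c [Hac [H1 H2]]]|Hno].
    + exists c; split; auto. rewrite !snoc2; split; apply Arel_intro with n;
        rewrite ?length_app; simpl; auto; lia.
    + exfalso.
      destruct (pw_sel (fun J => isat Mj d J) (LL V n)) as [S1 [HS1 HS1']].
      destruct (pw_sel (fun J => ~ isat Mj d J) (LL V n)) as [S2 [HS2 HS2']].
      assert (Ha : isat Mi a (IImp (Conj S1) (Disj S2))).
      { simpl. intros c Hac HC. apply NNPP; intro HD. apply Hno; exists c.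
        rewrite Conj_sat in HC. split; [auto|split].
        - intros I HI Hc. apply NNPP; intro Hd. apply HD. apply Disj_sat.
          exists I; split; auto. apply HS2'; auto.
        - intros I HI Hd. apply HC. apply HS1'; auto. }
      apply Ht in Ha; [|apply imp_in; auto].
      simpl in Ha. specialize (Ha d Hbd).
      assert (HC : isat Mj d (Conj S1)) by (apply Conj_sat; intros I HI; apply HS1'; auto).
      apply Ha in HC. apply Disj_sat in HC. destruct HC as [I [HI HId]].
      apply HS2' in HI. tauto.
  -
    intros as_ a bs b d f HA Hbd Hdf Hlt.
    destruct (Arel_dec _ _ _ _ _ _ _ _ HA) as [n [Hl [Hk Ht]]].
    destruct n as [|[|n]]; [lia|lia|].
    destruct (classic (exists c e, relR Mi a c /\ relB Mi c e /\ thy V n Mi Mj e f))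
      as [[c [e [Hac [Hce H1]]]]|Hno].
    + exists c, e; split; [|split]; auto. rewrite !snoc3; apply Arel_intro with n;
        rewrite ?length_app; simpl; auto; lia.
    + exfalso.
      destruct (pw_sel (fun J => ~ isat Mj f J) (LL V n)) as [T [HT HT']].
      assert (Ha : isat Mi a (IBox (Disj T))).
      { simpl. intros c Hac e Hce. apply NNPP; intro HD. apply Hno; exists c, e.
        split; [auto|split; [auto|]].
        intros I HI He. apply NNPP; intro Hf. apply HD. apply Disj_sat.
        exists I; split; auto. apply HT'; auto. }
      apply Ht in Ha; [|apply LL_mono; apply box_in; auto].
      simpl in Ha. specialize (Ha d Hbd f Hdf).
      apply Disj_sat in Ha. destruct Ha as [I [HI HIf]].
      apply HT' in HI. tauto.
  -
    intros as_ a bs b d HA Hbd Hlt.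
    destruct (Arel_dec _ _ _ _ _ _ _ _ HA) as [n [Hl [Hk Ht]]].
    destruct n as [|[|n]]; [lia|lia|].
    destruct (classic (exists c, relR Mi a c /\ forall c', relD Mi c c' ->
       exists d', relD Mj d d' /\ thy V n Mi Mj c' d'))
      as [[c [Hac H1]]|Hno].
    + exists c; split; auto.
      exists (as_ ++ [a]), c, (bs ++ [b]), d. rewrite <- !snoc2.
      split; [reflexivity|split; [reflexivity|split; [rewrite !length_app; simpl; lia|]]].
      intros c' Hcc' _. destruct (H1 c' Hcc') as [d' [Hdd' Ht']].
      exists d'; split; auto. rewrite !snoc2. apply Arel_intro with n;
        rewrite ?length_app; simpl; auto; lia.
    + exfalso.
      destruct (pw_sel (fun X => forall d', relD Mj d d' -> ~ isat Mj d' (Conj X))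
                  (pw (LL V n))) as [T [HT HT']].
      assert (Ha : isat Mi a (IDia (Disj (map Conj T)))).
      { simpl. intros c Hac.
        destruct (classic (exists c', relD Mi c c' /\ forall d', relD Mj d d' ->
                     ~ thy V n Mi Mj c' d')) as [[c' [Hcc' Hc']]|Hno2].
        - destruct (pw_sel (fun J => isat Mi c' J) (LL V n)) as [X [HX HX']].
          exists c'; split; auto. apply Disj_sat. exists (Conj X); split.
          + apply in_map. apply HT'. split; auto.
            intros d' Hdd' HC. apply (Hc' d' Hdd'). rewrite Conj_sat in HC.
            intros I HI HIc. apply HC. apply HX'; auto.
          + apply Conj_sat. intros I HI; apply HX'; auto.
        - exfalso; apply Hno; exists c; split; auto.
          intros c' Hcc'. apply NNPP; intro H2. apply Hno2; exists c'; split; auto.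
          intros d' Hdd' Ht'. apply H2; exists d'; auto. }
      apply Ht in Ha; [|apply LL_mono; apply dia_in; auto].
      simpl in Ha. destruct (Ha d Hbd) as [d' [Hdd' HD]].
      apply Disj_sat in HD. destruct HD as [Y [HY HYd]].
      apply in_map_iff in HY. destruct HY as [X [<- HX]].
      apply HT' in HX. destruct HX as [_ HX]. apply (HX d' Hdd' HYd).
  -
    intros as_ a bs b c HB Hac Hlt.
    destruct HB as [s0 [a0 [t0 [b0 [E1 [E2 [E3 H]]]]]]].
    apply app_inj_tail in E1; apply app_inj_tail in E2.
    destruct E1, E2; subst. apply H; auto.
Qed.
Theorem mainTheorem5 (phi : form) (x : nat) :
  (forall y, free_in y phi -> y = x) ->
  invariant22 phi x (depth phi) ->
  exists I : iform, log_equiv phi (ST22 I x).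
Proof.
  intros Hfree Hinv.
  set (V := Pvars phi). set (k := depth phi). set (L := LL V k).
  destruct (pw_sel (fun X => exists (M : model) (a : dom M), sat_at M a x phi /\
                     (forall I, In I X <-> In I L /\ isat M a I)) (pw L))
    as [Ss [_ HSs]].
  exists (Disj (map Conj Ss)).
  intros M g. rewrite ST_isat. split.
  - intros Hs.
    assert (Hat : sat_at M (g x) x phi).
    { intros g' Hg'. refine (proj1 (sat_ext phi M g g' _) Hs).
      intros y Hy. rewrite (Hfree y Hy); auto. }
    destruct (pw_sel (fun J => isat M (g x) J) L) as [X [HX HX']].
    apply Disj_sat. exists (Conj X); split.
    + apply in_map. apply HSs. split; auto. exists M, (g x); split; auto.
    + apply Conj_sat. intros I HI; apply HX'; auto.
  - intros HD. apply Disj_sat in HD. destruct HD as [Y [HY HYd]].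
    apply in_map_iff in HY. destruct HY as [X [<- HX]].
    apply HSs in HX. destruct HX as [_ [M1 [a1 [Hat1 HX]]]].
    rewrite Conj_sat in HYd.
    assert (H0 : Arel V k M1 M [a1] [g x]).
    { apply (Arel_intro V k M1 M [] a1 [] (g x) k); auto.
      intros I HI Ha. apply HYd. apply HX; auto. }
    assert (Hasim : asim22 (fun n => occurs_P n phi) k M1 M a1 (g x)
              (Arel V k M1 M) (Arel V k M M1) (Brel V k M1 M) (Brel V k M M1)).
    { split; [apply tuple_A|split; [apply tuple_A|split; [apply tuple_B|split; [apply tuple_B|]]]].
      split; [exact H0|split; apply dir_ok; intros n Hn; apply Pvars_ok; auto]. }
    apply (Hinv (fun n => occurs_P n phi) (fun n H => H) M1 M a1 (g x) _ _ _ _ Hasim a1 (g x) H0 Hat1 g eq_refl).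
Qed.
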